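(* Let $s_1,s_2\ge0$, $s=(s_1,s_2)$. For a probability vector $q$ on $\hat{\mathcal X}$, define: - $A(x,\hat x,s)=\exp\{-s_1d(x,\hat x)-s_2g(p,q_{Q[q]},\hat x)\}$, with $g(p,r,\hat x)=f\big(\tfrac{p(\hat x)}{r(\hat x)}\big)-\tfrac{p(\hat x)}{r(\hat x)}\partial f\big(\tfrac{p(\hat x)}{r(\hat x)}\big)$; - $Q[q](\hat x|x)=q(\hat x)A(x,\hat x,s)/\sum_{i}q(i)A(x,i,s)$, which is defined implicitly, since $A$ depends on the output marginal $q_{Q[q]}$ of $Q[q]$. Let $q^*$ achieve the minimum below, and set $$D_s=\sum_{x,\hat x}p(x)\frac{q^*(\hat x)A(x,\hat x,s)}{\sum_i q^*(i)A(x,i,s)}d(x,\hat x),\qquad P_s=D_f(p\|q_{Q[q^*]}).$$ Then $$R(D_s,P_s)=-s_1D_s-s_2P_s+\min_q\Big[s_2\sum_{\hat x}p(\hat x)\,\partial f\Big(\frac{p(\hat x)}{q_{Q[q]}(\hat x)}\Big)-\sum_x p(x)\log\Big(\sum_{\hat x}q(\hat x)A(x,\hat x,s)\Big)\Big].$$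
   Context: Finite alphabets $\mathcal X=\hat{\mathcal X}$ (same finite set). The source distribution is $p$ on $\mathcal X$, and $d:\mathcal X\times\hat{\mathcal X}\to[0,\infty)$ is a distortion. $f:(0,\infty)\to\mathbb R$ is convex with $f(1)=0$, and $D_f(p\|q)=\sum_x q(x)f(p(x)/q(x))$. $\partial f(t)$ denotes a subgradient of $f$ at $t$. For a transition matrix $Q$, $q_Q(\hat x)=\sum_xp(x)Q(\hat x|x)$ is the output marginal, and $I(p,Q)=\sum_{x,\hat x}p(x)Q(\hat x|x)\log\frac{Q(\hat x|x)}{q_Q(\hat x)}$. The rate-distortion-perception function is $R(D,P)=\min_Q I(p,Q)$ subject to $\sum_{x,\hat x}p(x)Q(\hat x|x)d(x,\hat x)\le D$ and $D_f(p\|q_Q)\le P$, for $D,P>0$. *)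

(* Defs.v *)
From mathcomp Require Import all_boot all_order all_algebra.
From mathcomp Require Import reals sequences exp.
Set Implicit Arguments. Unset Strict Implicit. Unset Printing Implicit Defensive.
Import Order.TTheory GRing.Theory Num.Theory.
Local Open Scope ring_scope.

Section RDP.
Context {R : realType} {X : finType}.

Definition is_prob (q : X -> R) : Prop :=
  (forall x, 0 <= q x) /\ \sum_(x : X) q x = 1.

(* transition matrix Q x xh = Q(xh | x) *)
Definition is_channel (Q : X -> X -> R) : Prop := forall x, is_prob (Q x).

Definition qout (p : X -> R) (Q : X -> X -> R) (xh : X) : R :=
  \sum_(x : X) p x * Q x xh.

Definition Df (f : R -> R) (p q : X -> R) : R :=
  \sum_(x : X) q x * f (p x / q x).

(* mutual information I(p,Q) (terms with Q = 0 contribute 0) *)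
Definition MI (p : X -> R) (Q : X -> X -> R) : R :=
  \sum_(x : X) \sum_(xh : X) p x * Q x xh * ln (Q x xh / qout p Q xh).

Definition avg_dist (p : X -> R) (d : X -> X -> R) (Q : X -> X -> R) : R :=
  \sum_(x : X) \sum_(xh : X) p x * Q x xh * d x xh.

(* Q is feasible for R(D,P); D_f(p||q_Q) requires q_Q > 0 *)
Definition feasible (p : X -> R) (d : X -> X -> R) (f : R -> R)
  (D P : R) (Q : X -> X -> R) : Prop :=
  [/\ is_channel Q, (forall xh, 0 < qout p Q xh),
      avg_dist p d Q <= D & Df f p (qout p Q) <= P].

Definition is_min (S : R -> Prop) (v : R) : Prop :=
  S v /\ forall y, S y -> v <= y.

Definition RDP_is (p : X -> R) (d : X -> X -> R) (f : R -> R)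
  (D P v : R) : Prop :=
  is_min (fun y => exists Q, feasible p d f D P Q /\ MI p Q = y) v.

Definition convex_pos (f : R -> R) : Prop :=
  forall x y t, 0 < x -> 0 < y -> 0 <= t <= 1 ->
    f (t * x + (1 - t) * y) <= t * f x + (1 - t) * f y.

Definition is_subgrad (f df : R -> R) : Prop :=
  forall t u, 0 < t -> 0 < u -> f t + df t * (u - t) <= f u.

Definition gfun (f df : R -> R) (p r : X -> R) (xh : X) : R :=
  f (p xh / r xh) - p xh / r xh * df (p xh / r xh).

Definition Aw (p : X -> R) (d : X -> X -> R) (f df : R -> R) (s1 s2 : R)
  (Q : X -> X -> R) (x xh : X) : R :=
  expR (- s1 * d x xh - s2 * gfun f df p (qout p Q) xh).

(* Q = Q[q] : the implicit (fixed-point) definition *)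
Definition is_Qof (p : X -> R) (d : X -> X -> R) (f df : R -> R) (s1 s2 : R)
  (q : X -> R) (Q : X -> X -> R) : Prop :=
  forall x xh, Q x xh =
    q xh * Aw p d f df s1 s2 Q x xh / \sum_(i : X) q i * Aw p d f df s1 s2 Q x i.

(* the bracket minimised over q, with Q = Q[q] *)
Definition bracket (p : X -> R) (d : X -> X -> R) (f df : R -> R) (s1 s2 : R)
  (q : X -> R) (Q : X -> X -> R) : R :=
  s2 * (\sum_(xh : X) p xh * df (p xh / qout p Q xh))
  - \sum_(x : X) p x * ln (\sum_(xh : X) q xh * Aw p d f df s1 s2 Q x xh).

Definition qdom (q : X -> R) : Prop := is_prob q /\ forall xh, 0 < q xh.

End RDP.

(* Main.v *)
Require Import Defs.
From mathcomp Require Import all_boot all_order all_algebra.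
From mathcomp Require Import reals sequences exp.
From mathcomp Require Import ring lra.
Import Order.TTheory GRing.Theory Num.Theory.
Local Open Scope ring_scope.

Lemma ln_le_sub1 {R : realType} (y : R) : 0 < y -> ln y <= y - 1.
Proof.
move=> y0; have := @le_ln1Dx R (y - 1).
have -> : 1 + (y - 1) = y by ring.
apply; lra.
Qed.

Lemma gibbs_term {R : realType} (Q q A Z : R) :
  0 <= Q -> 0 < q -> 0 < A -> 0 < Z ->
  Q - q * A / Z <= Q * ln (Q / q) - Q * ln A + Q * ln Z.
Proof.
move=> Q0 q0 A0 Z0.
have [->|Qp] := eqVneq Q 0.
  rewrite !mul0r subrr addr0 add0r oppr_le0; apply: divr_ge0; last exact: ltW.
  by apply: mulr_ge0; apply: ltW.
have QP : 0 < Q by rewrite lt_neqAle eq_sym Qp Q0.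
have h := @ln_le_sub1 R (q * A / (Q * Z)) (divr_gt0 (mulr_gt0 q0 A0) (mulr_gt0 QP Z0)).
rewrite ln_div ?posrE ?mulr_gt0 // !lnM ?posrE // in h.
rewrite ln_div ?posrE //.
have e : Q * (q * A / (Q * Z)) = q * A / Z by field; apply/andP; split; apply/negP => /eqP H; lra.
move: h e; set t := q * A / (Q * Z); set u := q * A / Z.
move: (ln q) (ln A) (ln Q) (ln Z) => a b c z h e.
nra.
Qed.

Lemma kl_term {R : realType} (a b : R) : 0 < a -> 0 < b -> b * ln (a / b) <= a - b.
Proof.
move=> a0 b0; have h := ln_le_sub1 _ (divr_gt0 a0 b0).
have e : b * (a / b) = a by field; apply/negP => /eqP H; lra.
move: h e; set t := a / b; move: (ln t) => l h e; nra.
Qed.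

Lemma sum_gt0 {R : realType} {X : finType} (F : X -> R) (j : X) :
  (forall i, 0 <= F i) -> 0 < F j -> 0 < \sum_(i : X) F i.
Proof.
move=> h hj; rewrite (bigD1 j) //=; apply: ltr_pwDl => //.
by apply: sumr_ge0 => i _.
Qed.

Lemma lower_bound {R : realType} {X : finType}
  (p : X -> R) (d : X -> X -> R) (f df : R -> R) (s1 s2 : R)
  (Qof : (X -> R) -> X -> X -> R) (qstar : X -> R) :
  is_prob p -> (forall x, 0 < p x) -> is_subgrad f df ->
  0 <= s1 -> 0 <= s2 ->
  (forall q, qdom q -> is_Qof p d f df s1 s2 q (Qof q)) ->
  (forall q, qdom q ->
     bracket p d f df s1 s2 qstar (Qof qstar) <= bracket p d f df s1 s2 q (Qof q)) ->
  forall Q, is_channel Q -> (forall xh, 0 < qout p Q xh) ->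
  bracket p d f df s1 s2 qstar (Qof qstar) <=
    MI p Q + s1 * avg_dist p d Q + s2 * Df f p (qout p Q).
Proof.
move=> hp hpp hsg hs1 hs2 hQof hmin Q hch hpos.
pose q := qout p Q.
have sum1 : \sum_(xh : X) q xh = 1.
  rewrite /q /qout exchange_big /=.
  under eq_bigr => x _ do rewrite -mulr_sumr (hch x).2 mulr1.
  exact: hp.2.
have qd : qdom q by split => //; split => // xh; exact: ltW (hpos xh).
apply: le_trans (hmin q qd) _.
pose Qq := Qof q. have hQq := hQof q qd.
pose A x xh := Aw p d f df s1 s2 Qq x xh.
pose Z x := \sum_(i : X) q i * A x i.
have Zp : forall x, 0 < Z x.
  move=> x; apply: (sum_gt0 _ x).
    by move=> i; apply: mulr_ge0; [exact: ltW (hpos i)| exact: ltW (expR_gt0 _)].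
  by apply: mulr_gt0; [exact: hpos| exact: expR_gt0].
have Qqp : forall x xh, 0 < Qq x xh.
  move=> x xh; rewrite /Qq hQq; apply: divr_gt0; last exact: Zp.
  by apply: mulr_gt0; [exact: hpos| exact: expR_gt0].
pose r := qout p Qq.
have rp : forall xh, 0 < r xh.
  move=> xh; apply: (sum_gt0 (fun x => p x * Qq x xh) xh).
    by move=> x; apply: mulr_ge0; apply: ltW.
  by apply: mulr_gt0.
pose g xh := gfun f df p r xh.
have step1 : forall x, 0 <= \sum_(xh : X) (Q x xh * ln (Q x xh / q xh)
      + Q x xh * (s1 * d x xh + s2 * g xh)) + ln (Z x).
  move=> x.
  have H : \sum_(xh : X) (Q x xh - q xh * A x xh / Z x) <=
     \sum_(xh : X) (Q x xh * ln (Q x xh / q xh) - Q x xh * ln (A x xh) + Q x xh * ln (Z x)).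
    apply: ler_sum => xh _; apply: gibbs_term; [exact: (hch x).1 | exact: hpos | exact: expR_gt0 | exact: Zp].
  have L : \sum_(xh : X) (Q x xh - q xh * A x xh / Z x) = 0.
    by rewrite sumrB -mulr_suml (hch x).2 -/(Z x) divff ?subrr // (gt_eqF (Zp x)).
  rewrite L big_split /= -mulr_suml (hch x).2 mul1r in H.
  apply: (le_trans H); rewrite lerD2r; apply: ler_sum => xh _.
  rewrite /A /Aw expRK /g /r le_eqVlt; apply/orP; left; apply/eqP; ring.
pose SG := \sum_(xh : X) q xh * g xh.
pose SlnZ := \sum_(x : X) p x * ln (Z x).
pose Sdf := \sum_(xh : X) p xh * df (p xh / r xh).
have stepa : 0 <= MI p Q + s1 * avg_dist p d Q + s2 * SG + SlnZ.
  have H : 0 <= \sum_(x : X) p x * (\sum_(xh : X) (Q x xh * ln (Q x xh / q xh)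
      + Q x xh * (s1 * d x xh + s2 * g xh)) + ln (Z x)).
    by apply: sumr_ge0 => x _; apply: mulr_ge0; [exact: ltW (hpp x) | exact: step1].
  apply: (le_trans H); rewrite le_eqVlt; apply/orP; left; apply/eqP.
  have eG : SG = \sum_(x : X) \sum_(xh : X) p x * Q x xh * g xh.
    rewrite /SG exchange_big; apply: eq_bigr => xh _ /=.
    by rewrite /q /qout mulr_suml.
  rewrite eG /MI /avg_dist /SlnZ.
  transitivity (\sum_(x : X) (\sum_(xh : X) (p x * Q x xh * ln (Q x xh / qout p Q xh)
      + s1 * (p x * Q x xh * d x xh) + s2 * (p x * Q x xh * g xh)) + p x * ln (Z x))).
    apply: eq_bigr => x _; rewrite mulrDr mulr_sumr; congr (_ + _).
    by apply: eq_bigr => xh _; rewrite /q; ring.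
  rewrite big_split /=; congr (_ + _).
  under eq_bigr => x _ do rewrite !big_split /=.
  rewrite !big_split /= !mulr_sumr; congr (_ + _ + _); apply: eq_bigr => x _;
    by rewrite mulr_sumr.
have stepb : Sdf + SG <= Df f p q.
  rewrite /Df /Sdf /SG -big_split; apply: ler_sum => xh _ /=.
  have tp : 0 < p xh / r xh by apply: divr_gt0.
  have up : 0 < p xh / q xh by apply: divr_gt0; [exact: hpp | exact: hpos].
  have h := hsg _ _ tp up.
  have h2 := ler_wpM2l (ltW (hpos xh)) h.
  have e1 : p xh * df (p xh / r xh) + q xh * g xh =
      q xh * (f (p xh / r xh) + df (p xh / r xh) * (p xh / q xh - p xh / r xh)).
    rewrite /g /gfun; field.
    by rewrite !gt_eqF //; exact: hpos.
  by rewrite e1.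
change (s2 * Sdf - SlnZ <= MI p Q + s1 * avg_dist p d Q + s2 * Df f p q).
move: stepa stepb; move: (MI p Q) (avg_dist p d Q) (Df f p q) SG SlnZ Sdf => a b c e h k.
move=> Ha Hb; nra.
Qed.

Theorem corollary1 (R : realType) (X : finType)
  (p : X -> R) (d : X -> X -> R) (f df : R -> R) (s1 s2 : R)
  (Qof : (X -> R) -> X -> X -> R) (qstar : X -> R) :
  is_prob p -> (forall x, 0 < p x) ->
  (forall x xh, 0 <= d x xh) ->
  convex_pos f -> f 1 = 0 -> is_subgrad f df ->
  0 <= s1 -> 0 <= s2 ->
  (forall q, qdom q -> is_Qof p d f df s1 s2 q (Qof q)) ->
  qdom qstar ->
  (forall q, qdom q ->
     bracket p d f df s1 s2 qstar (Qof qstar) <= bracket p d f df s1 s2 q (Qof q)) ->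
  let Ds := \sum_(x : X) \sum_(xh : X)
      p x * (qstar xh * Aw p d f df s1 s2 (Qof qstar) x xh
             / \sum_(i : X) qstar i * Aw p d f df s1 s2 (Qof qstar) x i) * d x xh in
  let Ps := Df f p (qout p (Qof qstar)) in
  RDP_is p d f Ds Ps
    (- s1 * Ds - s2 * Ps + bracket p d f df s1 s2 qstar (Qof qstar)).
Proof.
move=> hp hpp hd hconv hf1 hsg hs1 hs2 hQof hqs hmin Ds Ps.
have LB := @lower_bound R X p d f df s1 s2 Qof qstar hp hpp hsg hs1 hs2 hQof hmin.
pose Qs := Qof qstar. have hQ := hQof qstar hqs.
pose A x xh := Aw p d f df s1 s2 Qs x xh.
pose Z x := \sum_(i : X) qstar i * A x i.
have qsp : forall xh, 0 < qstar xh := hqs.2.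
have Zp : forall x, 0 < Z x.
  move=> x; apply: (sum_gt0 _ x).
    by move=> i; apply: mulr_ge0; [exact: ltW (qsp i)| exact: ltW (expR_gt0 _)].
  by apply: mulr_gt0; [exact: qsp| exact: expR_gt0].
have Qsp : forall x xh, 0 < Qs x xh.
  move=> x xh; rewrite /Qs hQ; apply: divr_gt0; last exact: Zp.
  by apply: mulr_gt0; [exact: qsp| exact: expR_gt0].
have Qs1 : forall x, \sum_(xh : X) Qs x xh = 1.
  move=> x; rewrite (eq_bigr _ (fun xh _ => hQ x xh)) -mulr_suml.
  by rewrite -/(Z x) divff // gt_eqF.
have hch : is_channel Qs by move=> x; split => [xh|]; [exact: ltW | exact: Qs1].
pose r := qout p Qs.
have rp : forall xh, 0 < r xh.
  move=> xh; apply: (sum_gt0 (fun x => p x * Qs x xh) xh).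
    by move=> x; apply: mulr_ge0; apply: ltW.
  by apply: mulr_gt0.
have eDs : Ds = avg_dist p d Qs.
  rewrite /Ds /avg_dist; apply: eq_bigr => x _; apply: eq_bigr => xh _.
  by rewrite [Qs x xh]hQ.
have LBs := LB Qs hch rp.
have upper : MI p Qs <= - s1 * Ds - s2 * Ps + bracket p d f df s1 s2 qstar (Qof qstar).
  pose g xh := gfun f df p r xh.
  pose U1 := \sum_(x : X) \sum_(xh : X) p x * Qs x xh * ln (qstar xh / r xh).
  pose SG := \sum_(x : X) \sum_(xh : X) p x * Qs x xh * g xh.
  pose SlnZ := \sum_(x : X) p x * ln (Z x).
  pose Sdf := \sum_(xh : X) p xh * df (p xh / r xh).
  have term : forall x xh, ln (Qs x xh / r xh) =
      ln (qstar xh / r xh) - (s1 * d x xh + s2 * g xh) - ln (Z x).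
    move=> x xh; rewrite [Qs x xh]hQ -/(Z x).
    have Ap : 0 < A x xh by exact: expR_gt0.
    rewrite !ln_div ?posrE ?divr_gt0 ?mulr_gt0 ?qsp ?Zp ?rp // lnM ?posrE ?qsp //.
    rewrite /A /Aw expRK /g; ring.
  have E : MI p Qs = U1 - s1 * avg_dist p d Qs - s2 * SG - SlnZ.
    rewrite /MI /avg_dist /U1 /SG /SlnZ.
    transitivity (\sum_(x : X) (\sum_(xh : X) (p x * Qs x xh * ln (qstar xh / r xh)
        - s1 * (p x * Qs x xh * d x xh) - s2 * (p x * Qs x xh * g xh)) - p x * ln (Z x))).
      apply: eq_bigr => x _.
      have -> : p x * ln (Z x) = \sum_(xh : X) p x * Qs x xh * ln (Z x).
        by rewrite -mulr_suml -mulr_sumr Qs1 mulr1.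
      rewrite -sumrB; apply: eq_bigr => xh _; rewrite term; ring.
    rewrite sumrB; congr (_ - _).
    under eq_bigr => x _ do rewrite !sumrB.
    rewrite !sumrB !mulr_sumr; congr (_ - _ - _); apply: eq_bigr => x _; by rewrite mulr_sumr.
  have u1 : U1 <= 0.
    rewrite /U1 exchange_big /=.
    have H : \sum_(xh : X) r xh * ln (qstar xh / r xh) <= \sum_(xh : X) (qstar xh - r xh).
      by apply: ler_sum => xh _; apply: kl_term.
    have r1 : \sum_(xh : X) r xh = 1.
      rewrite /r /qout exchange_big /=.
      under eq_bigr => x _ do rewrite -mulr_sumr Qs1 mulr1.
      exact: hp.2.
    rewrite sumrB hqs.1.2 r1 subrr in H.
    apply: le_trans H; rewrite le_eqVlt; apply/orP; left; apply/eqP.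
    by apply: eq_bigr => xh _; rewrite /r /qout mulr_suml.
  have u3 : SG = Ps - Sdf.
    rewrite /SG exchange_big /= /Ps /Df /Sdf -sumrB; apply: eq_bigr => xh _.
    rewrite -mulr_suml -/(r xh) /g /gfun; change (\sum_i p i * Qs i xh) with (r xh); field.
    by rewrite gt_eqF.
  rewrite E u3 -eDs.
  have -> : bracket p d f df s1 s2 qstar (Qof qstar) = s2 * Sdf - SlnZ by [].
  lra.
split.
  exists Qs; split; last first.
    apply/eqP; rewrite eq_le upper /=.
    move: LBs; rewrite -eDs -/Ps => H; lra.
  split => //; by rewrite eDs.
move=> y [Q [[hQc hQp hQd hQP] <-]].
have := LB Q hQc hQp.
have h1 := ler_wpM2l hs1 hQd. have h2 := ler_wpM2l hs2 hQP.
move=> H; lra.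
Qed.
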